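(* Let $k\ge0$ be an integer and $\alpha>\beta>0$, and let $x_0$ be the unique zero of $D$ in $[\delta_{-1},\delta_1]$. Then $$ x_0\in\Big(-qs-\tfrac23\sqrt{(1-q^2)(1-s^2)},\,-qs\Big)\subset(\delta_{-1},\delta_1). $$
   Context: Put $r=2k+\alpha+\beta+1$, $q=(\alpha-\beta)/r$, $s=(\alpha+\beta)/r$, $\delta_{\pm1}=\mp qs\pm\sqrt{(1-q^2)(1-s^2)}$, $d(x)=1-q^2-s^2-2qsx-x^2$, $$A(x)=-\frac{x^3+3qsx^2+(2q^2+2s^2-1)x+qs}{2(1-x^2)d(x)},\qquad B(x)=\frac{d(x)r^2}{4(1-x^2)^2}+\frac{E(x)}{4(1-x^2)d(x)^2},$$ $E(x)=2qsx^3-(1-4q^2-4s^2+q^2s^2)x^2+6qsx+1-q^4-s^4+3q^2s^2$, and $D(x)=2(1-x^2)^2d(x)^3\big(4A(x)B(x)-B'(x)\big)$, which is a polynomial in $x$ having exactly one zero in $[\delta_{-1},\delta_1]$. *)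

(* Defs.v *)
From Stdlib Require Import Reals Lra.
From Coquelicot Require Import Coquelicot.
Open Scope R_scope.

Section Jacobi.
Variables (k : nat) (alpha beta : R).

Definition r_ : R := 2 * INR k + alpha + beta + 1.
Definition q_ : R := (alpha - beta) / r_.
Definition s_ : R := (alpha + beta) / r_.

(* delta_{+1} and delta_{-1}: the two roots -qs +- sqrt((1-q^2)(1-s^2)) of d *)
Definition sq_ : R := sqrt ((1 - q_^2) * (1 - s_^2)).
Definition delta_p : R := - (q_ * s_) + sq_.
Definition delta_m : R := - (q_ * s_) - sq_.

Definition d_ (x : R) : R := 1 - q_^2 - s_^2 - 2 * q_ * s_ * x - x^2.

Definition A_ (x : R) : R :=
  - (x^3 + 3 * q_ * s_ * x^2 + (2 * q_^2 + 2 * s_^2 - 1) * x + q_ * s_)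
  / (2 * (1 - x^2) * d_ x).

Definition E_ (x : R) : R :=
  2 * q_ * s_ * x^3 - (1 - 4 * q_^2 - 4 * s_^2 + q_^2 * s_^2) * x^2
  + 6 * q_ * s_ * x + 1 - q_^4 - s_^4 + 3 * q_^2 * s_^2.

Definition B_ (x : R) : R :=
  d_ x * r_^2 / (4 * (1 - x^2)^2) + E_ x / (4 * (1 - x^2) * d_ x^2).

(* the defining formula of D, valid off the singular points x = +-1, d(x)=0 *)
Definition D_formula (x : R) : R :=
  2 * (1 - x^2)^2 * (d_ x)^3 * (4 * A_ x * B_ x - Derive B_ x).

(* D as the polynomial it is: the (continuous) extension of the formula,
   D(x) := lim_{y -> x} D_formula(y). *)
Definition D_ (x : R) : R := Lim D_formula (Finite x).

End Jacobi.

(* Main.v *)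
Require Import Defs.
From Stdlib Require Import Reals Lra Psatz.
From Coquelicot Require Import Coquelicot.
Open Scope R_scope.

Definition Dp (q s x : R) : R :=
  let u := 1 - x^2 in let d := 1 - q^2 - s^2 - 2*q*s*x - x^2 in
  let up := -2*x in let dp := -2*q*s - 2*x in
  let N := x^3 + 3*q*s*x^2 + (2*q^2 + 2*s^2 - 1)*x + q*s in
  let c := 1 - 4*q^2 - 4*s^2 + q^2*s^2 in
  let E := 2*q*s*x^3 - c*x^2 + 6*q*s*x + 1 - q^4 - s^4 + 3*q^2*s^2 in
  let Ep := 6*q*s*x^2 - 2*c*x + 6*q*s in
  - N*E - (Ep*u*d - E*up*d - 2*E*u*dp)/2.

Lemma loc_ne (x c : R) : locally' x (fun y => y <> c).
Proof.
destruct (Req_dec x c) as [->|H].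
- exists (mkposreal 1 Rlt_0_1). intros y _ Hy. exact Hy.
- assert (H0 : 0 < Rabs (x - c)) by (apply Rabs_pos_lt; lra).
  exists (mkposreal _ H0). intros y Hy _ E. subst y.
  change (Rabs (c - x) < Rabs (x - c)) in Hy. rewrite Rabs_minus_sym in Hy. lra.
Qed.

Lemma Dp_cont (q s : R) : continuity (Dp q s).
Proof. unfold Dp. reg. Qed.


Lemma Mpos (l m : R) : l <= 1/4 -> 0 <= m <= 1/2 ->
  0 < 9*(1890 + 5600*l - 12230*m + 11350*m^2)^2 - (l - m + m^2)*(19710 - 34075*m)^2.
Proof.
intros hl hm.
set (X := 1890 - 12230*m + 11350*m^2).
set (Gm := 19710 - 34075*m).
assert (E1 : 9*(1890 + 5600*l - 12230*m + 11350*m^2)^2 - (l - m + m^2)*Gm^2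
   = (l - 1/4) * (282240000*(l + 1/4) + (100800*X - Gm^2))
     + (15 + 115/2*m - 25*m^2) * (19725 - 146875/2*m + 68125*m^2))
  by (unfold X, Gm; field).
rewrite E1.
assert (f1 : 282240000*(l + 1/4) + (100800*X - Gm^2) <= 0).
{ assert (E2 : 141120000 + 100800*X - Gm^2 = -56852100 + 110452500*m - 17025625*m^2)
    by (unfold X, Gm; field).
  assert (0 <= m^2) by nra. lra. }
assert (f2 : 0 < 15 + 115/2*m - 25*m^2) by nra.
assert (f3 : 0 < 19725 - 146875/2*m + 68125*m^2).
{ assert (E3 : 19725 - 146875/2*m + 68125*m^2 = 75/2 + 10625/2*(1/2 - m) + 68125*(1/2-m)^2) by field.
  rewrite E3. assert (0 <= (1/2-m)^2) by (apply pow2_ge_0). lra. }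
assert (0 <= (l - 1/4) * (282240000*(l + 1/4) + (100800*X - Gm^2))) by nra.
assert (0 < (15 + 115/2*m - 25*m^2) * (19725 - 146875/2*m + 68125*m^2)) by (apply Rmult_lt_0_compat; lra).
lra.
Qed.

Definition R1u (u v : R) := 1890*(u*u+v*v)+9380*u*v-12230*u*v*(u+v)+11350*u*u*v*v.
Definition Gu (u v : R) := -19710*(u+v)+34075*u*v.

Lemma r1pos (u v : R) : 0 < u < 1 -> 0 < v < 1 -> 0 < R1u u v.
Proof. intros. unfold R1u. assert (h: 0 < 13160 - 12230*(u+v) + 11350*(u*v)) by nra.
assert (0 < u*v) by nra.
pose proof (pow2_ge_0 (u-v)). pose proof (Rmult_lt_0_compat _ _ H1 h). nra. Qed.

Lemma Kpos (u v : R) : 0 < u < 1 -> 0 < v < 1 ->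
  0 < 9 * R1u u v ^ 2 - u*v*(1-u)*(1-v) * Gu u v ^ 2.
Proof.
intros hu hv. set (sg := u + v). assert (hs : 0 < sg) by (unfold sg; lra).
set (l := u*v/sg^2). set (m := u*v/sg).
assert (E : 9 * R1u u v ^ 2 - u*v*(1-u)*(1-v) * Gu u v ^ 2 =
  sg^4 * (9*(1890 + 5600*l - 12230*m + 11350*m^2)^2 - (l - m + m^2)*(19710 - 34075*m)^2)).
{ unfold l, m, R1u, Gu, sg. field. lra. }
rewrite E. apply Rmult_lt_0_compat. { apply pow_lt; auto. }
apply Mpos.
- unfold l. apply (Rmult_le_reg_r (sg^2)). apply pow_lt; auto.
  unfold Rdiv. rewrite Rmult_assoc, Rinv_l. 2: { apply pow_nonzero; lra. }
  unfold sg. pose proof (pow2_ge_0 (u - v)). nra.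
- unfold m. split.
  + unfold Rdiv; apply Rmult_le_pos; [nra | left; apply Rinv_0_lt_compat; auto].
  + apply (Rmult_le_reg_r sg); auto. unfold Rdiv. rewrite Rmult_assoc, Rinv_l by lra.
    unfold sg; nra.
Qed.

Definition Wp (q s S : R) := (-2/3)*S + (32/243)*S^3 + (-14/3)*s^2*S + (-128/243)*s^2*S^3 + (-2/3)*s^4*S + (5)*q*s + (97/9)*q*s*S^2 + (64/729)*q*s*S^4 + (-4)*q*s^3 + (125/9)*q*s^3*S^2 + (-1)*q*s^5 + (-14/3)*q^2*S + (-128/243)*q^2*S^3 + (-4/3)*q^2*s^2*S + (352/243)*q^2*s^2*S^3 + (18)*q^2*s^4*S + (-4)*q^3*s + (125/9)*q^3*s*S^2 + (-4)*q^3*s^3 + (-347/9)*q^3*s^3*S^2 + (8)*q^3*s^5 + (-2/3)*q^4*S + (18)*q^4*s^2*S + (-70/3)*q^4*s^4*S + (-1)*q^5*s + (8)*q^5*s^3 + (-7)*q^5*s^5.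

Lemma Dneg (q s : R) : 0 < q < 1 -> 0 < s < 1 -> Dp q s (-(q*s)) < 0.
Proof.
intros hq hs.
assert (E : Dp q s (-(q*s)) = (q*s*((1-q^2)^2*(1-s^2)^2)) * (-5 - q^2 - s^2 + 7*q^2*s^2))
  by (unfold Dp; cbv zeta; field).
rewrite E. apply Rmult_pos_neg.
- apply Rmult_lt_0_compat. nra. apply Rmult_lt_0_compat; apply pow_lt; nra.
- assert (0 < q^2 < 1) by nra. assert (0 < s^2 < 1) by nra. nra.
Qed.

Lemma Dpos (q s S : R) : 0 < q < 1 -> 0 < s < 1 -> 0 < S ->
  S * S = (1 - q^2) * (1 - s^2) -> 0 < Dp q s (-(q*s) - 2/3*S).
Proof.
intros hq hs hS hSS.
assert (E : Dp q s (-(q*s) - 2/3*S) =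
  S^3 * (R1u (1-q^2) (1-s^2) + S*(q*s)*Gu (1-q^2) (1-s^2)/3) / 243
  + (S*S - (1-q^2)*(1-s^2)) * Wp q s S).
{ unfold Dp, R1u, Gu, Wp. field. }
rewrite E, hSS, Rminus_diag, Rmult_0_l, Rplus_0_r.
apply Rdiv_lt_0_compat; [|lra]. apply Rmult_lt_0_compat; [apply pow_lt; auto|].
assert (hu : 0 < 1 - q^2 < 1) by nra. assert (hv : 0 < 1 - s^2 < 1) by nra.
pose proof (r1pos _ _ hu hv) as h1. pose proof (Kpos _ _ hu hv) as h2.
set (a := R1u (1 - q^2) (1 - s^2)) in *.
set (b := S*(q*s)*Gu (1-q^2) (1-s^2)).
assert (hb2 : b^2 = (1 - q^2) * (1 - s^2) * (1 - (1 - q^2)) * (1 - (1 - s^2)) * Gu (1 - q^2) (1 - s^2) ^ 2).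
{ unfold b. replace ((S*(q*s)*Gu (1-q^2) (1-s^2))^2) with ((S*S)*(q^2*s^2)*Gu (1-q^2) (1-s^2)^2) by ring.
  rewrite hSS. ring. }
assert (9*a^2 > b^2) by lra.
destruct (Rle_or_lt 0 b). { lra. }
nra.
Qed.

Section S.
Variables (k : nat) (alpha beta : R).
Let q := q_ k alpha beta.
Let s := s_ k alpha beta.
Let r := r_ k alpha beta.

Definition Bp (x : R) : R :=
  let u := 1 - x^2 in let d := d_ k alpha beta x in
  let up := -2*x in let dp := -2*q*s - 2*x in
  let E := E_ k alpha beta x in
  let Ep := 6*q*s*x^2 - 2*(1 - 4*q^2 - 4*s^2 + q^2*s^2)*x + 6*q*s in
  r^2*(dp*u - 2*d*up)/(4*u^3) + (Ep*u*d - E*(up*d + 2*u*dp))/(4*u^2*d^3).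

Lemma B_deriv (x : R) : 1 - x^2 <> 0 -> d_ k alpha beta x <> 0 ->
  is_derive (B_ k alpha beta) x (Bp x).
Proof.
intros hu hd. unfold B_, Bp, E_. unfold d_ in *. fold q s r.
fold q s in hd.
assert (hu' : 1 + - (x*(x*1)) <> 0) by (intro h; apply hu; rewrite <- h; ring).
assert (hd' : 1 - q * (q * 1) - s * (s * 1) + - (2 * q * s * x) + - (x * (x * 1)) <> 0)
  by (intro h; apply hd; rewrite <- h; ring).
auto_derive; repeat split;
  try (repeat apply Rmult_integral_contrapositive_currified; auto; lra).
field. auto.
Qed.

Lemma Dform_eq (x : R) : 1 - x^2 <> 0 -> d_ k alpha beta x <> 0 ->
  D_formula k alpha beta x = Dp q s x.
Proof.
intros hu hd. unfold D_formula.
rewrite (is_derive_unique _ _ _ (B_deriv x hu hd)).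
unfold A_, B_, Bp, E_, Dp. unfold d_ in *. fold q s r in hd |- *.
field. auto.
Qed.

Lemma D_eq (x : R) : 0 <= (1 - q^2) * (1 - s^2) -> D_ k alpha beta x = Dp q s x.
Proof.
intros hA. set (S := sqrt ((1 - q^2) * (1 - s^2))).
assert (hS : S * S = (1 - q^2) * (1 - s^2)) by (apply sqrt_sqrt; auto).
unfold D_. rewrite (is_lim_unique _ _ (Dp q s x)). reflexivity.
apply (is_lim_ext_loc (Dp q s)).
- simpl.
  generalize (filter_and _ _ (loc_ne x 1) (filter_and _ _ (loc_ne x (-1))
    (filter_and _ _ (loc_ne x (- (q*s) + S)) (loc_ne x (- (q*s) - S))))).
  apply filter_imp. intros y (h1 & h2 & h3 & h4).
  symmetry. apply Dform_eq.
  + intro h. assert (h' : (1 - y) * (1 + y) = 0) by (rewrite <- h; ring).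
    apply Rmult_integral in h'. destruct h'; [apply h1 | apply h2]; lra.
  + unfold d_. fold q s. intro h.
    assert (h' : (S - (y + q*s)) * (S + (y + q*s)) = 0) by (rewrite <- h; replace ((S - (y + q*s)) * (S + (y + q*s))) with (S*S - (y+q*s)^2) by ring;
          rewrite hS; ring).
    apply Rmult_integral in h'. destruct h'; [apply h3 | apply h4]; lra.
- apply is_lim_continuity. apply Dp_cont.
Qed.
End S.


Theorem lemma5 (k : nat) (alpha beta x0 : R)
  (hbeta : 0 < beta) (hab : beta < alpha)
  (hx0 : delta_m k alpha beta <= x0 <= delta_p k alpha beta)
  (hD : D_ k alpha beta x0 = 0)
  (huniq : forall y, delta_m k alpha beta <= y <= delta_p k alpha beta ->
             D_ k alpha beta y = 0 -> y = x0) :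
  (- (q_ k alpha beta * s_ k alpha beta) - 2 / 3 * sq_ k alpha beta < x0 /\
   x0 < - (q_ k alpha beta * s_ k alpha beta)) /\
  (forall y,
     - (q_ k alpha beta * s_ k alpha beta) - 2 / 3 * sq_ k alpha beta < y <
       - (q_ k alpha beta * s_ k alpha beta) ->
     delta_m k alpha beta < y < delta_p k alpha beta).

Proof.
assert (hk := pos_INR k).
assert (hr : alpha + beta < r_ k alpha beta) by (unfold r_; lra).
assert (hr0 : 0 < r_ k alpha beta) by lra.
assert (hq : 0 < q_ k alpha beta < 1).
{ unfold q_. split. apply Rdiv_lt_0_compat; lra.
  apply (Rmult_lt_reg_r (r_ k alpha beta)); auto. unfold Rdiv. rewrite Rmult_assoc, Rinv_l by lra. lra. }
assert (hs : 0 < s_ k alpha beta < 1).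
{ unfold s_. split. apply Rdiv_lt_0_compat; lra.
  apply (Rmult_lt_reg_r (r_ k alpha beta)); auto. unfold Rdiv. rewrite Rmult_assoc, Rinv_l by lra. lra. }
set (q := q_ k alpha beta) in *. set (s := s_ k alpha beta) in *.
assert (hA : 0 < (1 - q^2) * (1 - s^2)) by (apply Rmult_lt_0_compat; nra).
assert (hS : 0 < sq_ k alpha beta) by (unfold sq_; fold q s; apply sqrt_lt_R0; auto).
assert (hSS : sq_ k alpha beta * sq_ k alpha beta = (1 - q^2) * (1 - s^2))
  by (unfold sq_; fold q s; apply sqrt_sqrt; lra).
unfold delta_m, delta_p in *. fold q s in hx0, huniq |- *.
set (S := sq_ k alpha beta) in *.
split; [| intros y hy; split; lra].
pose proof (Dneg q s hq hs) as hneg.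
pose proof (Dpos q s S hq hs hS hSS) as hpos.
destruct (IVT (fun y => - Dp q s y) (-(q*s) - 2/3*S) (-(q*s)))
  as [z [hz1 hz2]].
- apply continuity_opp. apply Dp_cont.
- lra.
- lra.
- lra.
- assert (hzD : Dp q s z = 0) by lra.
  assert (z <> -(q*s) - 2/3*S) by (intro e; rewrite e in hzD; lra).
  assert (z <> -(q*s)) by (intro e; rewrite e in hzD; lra).
  assert (ez : z = x0).
  { apply huniq. lra. rewrite D_eq. exact hzD. apply Rlt_le; exact hA. }
  subst z. lra.
Qed.
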